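(* There exist absolute constants $C_1,C_2>0$ and $C_3>1$ with the following property. Let $(V_o,w_o,\mu_o)$ be any simple weighted graph with adapted weight $\sigma_o$, and let $(V,w,\mu)$ be its modified graph with any weight $\mathfrak n$. Define the bounded function $\mathcal U$ on $V$ by $\mathcal U(x)=-C_1$ for $x\in V\setminus V_o$ and $\mathcal U(x)=C_2$ for $x\in V_o$. Then there exists a function $\varphi$ on $V$ with $1\le\varphi\le C_3$ and \[(\Delta+\mathcal U)\varphi\ge0\quad\text{on }V,\] where $\Delta$ is the formal Laplacian of $(V,w,\mu)$.
   Context: **Weighted graphs.** A simple weighted graph $(V,w,\mu)$ consists of a countably infinite set $V$, a symmetric function $w:V\times V\to[0,\infty)$ and a function $\mu:V\to(0,\infty)$. The graph with edges $\{x\sim y:w(x,y)>0\}$ is assumed to be locally finite, connected, and without loops or multiple edges. **Adapted weights.** An adapted weight is a symmetric $\sigma:E\to(0,1]$ with $\frac1{\mu(x)}\sum_y w(x,y)\sigma(x,y)^2\le1$ for all $x$. **Formal Laplacian.** $\Delta u(x)=\frac1{\mu(x)}\sum_y w(x,y)(u(x)-u(y))$. **Modified graph.** Fix an orientation $E_o^+$ of $E_o$, and let $\mathfrak n:E_o\to\mathbb N_+$ be symmetric with $\mathfrak n\ge2$. For $e=(x,y)\in E_o^+$, add distinct new vertices $x^e_1,\dots,x^e_{\mathfrak n(e)-1}$, set $x_0^e=x$, $x^e_{\mathfrak n(e)}=y$, and replace the edge $x\sim y$ by the path $x^e_0\sim\cdots\sim x^e_{\mathfrak n(e)}$. Weights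 and measure: - $w(x^e_i,x^e_{i+1})=\mathfrak n(e)w_o(e)$, symmetric, and $w=0$ otherwise; - $\mu=\mu_o$ on $V_o$, and $\mu(x^e_i)=2w_o(e)\sigma_o(e)^2/\mathfrak n(e)$ for $1\le i\le\mathfrak n(e)-1$. *)

(* Defs.v *)
From HB Require Import structures.
From mathcomp Require Import all_boot all_order all_algebra.
From mathcomp Require Import all_classical all_reals.
From mathcomp Require Import Rstruct.
From Stdlib Require Import Rdefinitions.
Set Implicit Arguments. Unset Strict Implicit. Unset Printing Implicit Defensive.
Import Order.TTheory GRing.Theory Num.Theory.
Local Open Scope classical_set_scope.
Local Open Scope ring_scope.

Notation RR := Rdefinitions.R (only parsing).

(* Formal Laplacian: Delta u(x) = 1/mu(x) * sum_y w(x,y) (u(x) - u(y)).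
   The sum is over the (finite, by local finiteness) set of neighbours
   {y | w x y <> 0}; terms outside this set vanish anyway. *)
Definition laplacian (V : choiceType) (w : V -> V -> RR) (mu : V -> RR)
    (u : V -> RR) (x : V) : RR :=
  (mu x)^-1 * \sum_(y \in [set y | w x y != 0]) (w x y * (u x - u y)).

Definition adj (V : Type) (w : V -> V -> RR) : rel V := fun x y => w x y != 0.

Definition simple_wgraph (V : countType) (w : V -> V -> RR) (mu : V -> RR) : Prop :=
  [/\ infinite_set [set: V],
      ((forall x y, w x y = w y x) /\ (forall x, w x x = 0)),
      ((forall x y, 0 <= w x y) /\ (forall x, 0 < mu x)),
      (forall x, finite_set [set y | w x y != 0]) &
      (forall x y, exists s : seq V, path (adj w) x s /\ last x s = y)].

(* Adapted weight sigma : E -> (0,1] (given as a function on V x V, only its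
   values on edges matter). *)
Definition adapted (V : choiceType) (w : V -> V -> RR) (mu : V -> RR)
    (sigma : V -> V -> RR) : Prop :=
  [/\ (forall x y, 0 < w x y -> sigma x y = sigma y x),
      (forall x y, 0 < w x y -> 0 < sigma x y <= 1) &
      (forall x, (mu x)^-1 *
         \sum_(y \in [set y | w x y != 0]) (w x y * sigma x y ^+ 2) <= 1)].

Definition orientation (V : Type) (w : V -> V -> RR) (ori : rel V) : Prop :=
  forall x y, 0 < w x y -> ori x y = ~~ ori y x.

Definition edge_weight (V : Type) (w : V -> V -> RR) (n : V -> V -> nat) : Prop :=
  forall x y, 0 < w x y -> n x y = n y x /\ leq 2 (n x y).

Section Modified.
Variables (Vo : countType) (wo : Vo -> Vo -> RR) (muo : Vo -> RR)
  (sigma : Vo -> Vo -> RR) (ori : rel Vo) (n : Vo -> Vo -> nat).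

(* New vertex x^e_i for e = (x,y) in E_o^+ and 1 <= i <= n(e)-1,
   encoded as ((x, y), i). *)
Definition newv_pred (p : Vo * Vo * nat) : bool :=
  [&& ori p.1.1 p.1.2, 0 < wo p.1.1 p.1.2, leq 1 p.2 & leq p.2.+1 (n p.1.1 p.1.2)].

Definition newv := {p : Vo * Vo * nat | newv_pred p}.

Definition modV : choiceType := (Vo + newv)%type.

(* Position of an old vertex a on the path of edge e = (x,y), as the
   index i with x^e_i = a (x^e_0 = x, x^e_{n(e)} = y). *)
Definition old_at (a x y : Vo) (i : nat) : bool :=
  ((i == 0%N) && (a == x)) || ((i == n x y) && (a == y)).

(* w(x^e_i, x^e_{i+1}) = n(e) w_o(e), symmetric, 0 otherwise. *)
Definition modw (u v : modV) : RR :=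
  match u, v with
  | inl _, inl _ => 0
  | inl a, inr q =>
      let: (x, y, j) := val q in
      if old_at a x y j.-1 || old_at a x y j.+1 then (n x y)%:R * wo x y else 0
  | inr p, inl a =>
      let: (x, y, i) := val p in
      if old_at a x y i.-1 || old_at a x y i.+1 then (n x y)%:R * wo x y else 0
  | inr p, inr q =>
      let: (x, y, i) := val p in
      let: (x', y', j) := val q in
      if [&& x == x', y == y' & (i == j.+1) || (j == i.+1)]
      then (n x y)%:R * wo x y else 0
  end.

Definition modmu (u : modV) : RR :=
  match u with
  | inl a => muo a
  | inr p => let: (x, y, _) := val p in
             2 * wo x y * sigma x y ^+ 2 / (n x y)%:R
  end.

Definition potU (C1 C2 : RR) (u : modV) : RR :=
  match u with inl _ => C2 | inr _ => - C1 end.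

End Modified.

Arguments modV {Vo} wo ori n.
Arguments modw {Vo} wo ori n u v.
Arguments modmu {Vo} wo muo sigma ori n u.
Arguments potU {Vo wo ori n} C1 C2 u.

(* Main.v *)
Require Import Defs.
From HB Require Import structures.
From mathcomp Require Import all_boot all_order all_algebra.
From mathcomp Require Import all_classical all_reals.
From mathcomp Require Import Rstruct.
From Stdlib Require Import Rdefinitions.
From mathcomp Require Import ring lra zify.
Import Order.TTheory GRing.Theory Num.Theory.
Local Open Scope classical_set_scope.
Local Open Scope ring_scope.
Set Implicit Arguments. Unset Strict Implicit. Unset Printing Implicit Defensive.

Definition psi (Vo : countType) (sigma : Vo -> Vo -> RR) (n : Vo -> Vo -> nat) (x y : Vo) (i : nat) :=
  1 + 4 * sigma x y ^+ 2 * ((i%:R / (n x y)%:R) * (1 - i%:R / (n x y)%:R)).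

Definition phi (Vo : countType) (wo : Vo -> Vo -> RR) (sigma : Vo -> Vo -> RR) (ori : rel Vo) (n : Vo -> Vo -> nat)
  (u : modV wo ori n) :=
  match u return RR with inl _ => 1 | inr p => let: (x, y, i) := val p in psi sigma n x y i end.
Arguments phi {Vo wo} sigma {ori n} u.

Definition hh (Vo : countType) (wo : Vo -> Vo -> RR) (ori : rel Vo) (n : Vo -> Vo -> nat) (a z : Vo) : modV wo ori n :=
  if @insub _ (newv_pred wo ori n) (newv wo ori n) (a, z, 1%N) is Some q then inr q
  else if @insub _ (newv_pred wo ori n) (newv wo ori n) (z, a, (n z a).-1) is Some q then inr q
  else inl a.
Definition prevv (Vo : countType) (wo : Vo -> Vo -> RR) (ori : rel Vo) (n : Vo -> Vo -> nat) (x y : Vo) (i : nat) : modV wo ori n :=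
  if @insub _ (newv_pred wo ori n) (newv wo ori n) (x, y, i.-1) is Some q then inr q else inl x.
Definition nextv (Vo : countType) (wo : Vo -> Vo -> RR) (ori : rel Vo) (n : Vo -> Vo -> nat) (x y : Vo) (i : nat) : modV wo ori n :=
  if @insub _ (newv_pred wo ori n) (newv wo ori n) (x, y, i.+1) is Some q then inr q else inl y.

Section EqL.
Variables (Vo : countType) (wo : Vo -> Vo -> RR) (ori : rel Vo) (n : Vo -> Vo -> nat).
Lemma eqLL (b c : Vo) : (inl b == inl c :> modV wo ori n) = (b == c).
Proof. by apply/eqP/eqP => [[]|->]. Qed.
Lemma eqLR (b : Vo) q : (inl b == inr q :> modV wo ori n) = false.
Proof. by apply/eqP. Qed.
Lemma eqRL (b : Vo) q : (inr q == inl b :> modV wo ori n) = false.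
Proof. by apply/eqP. Qed.
Lemma eqRR p q : (inr p == inr q :> modV wo ori n) = (val p == val q).
Proof. rewrite val_eqE; by apply/eqP/eqP => [[]|->]. Qed.
End EqL.

Lemma modw_new (Vo : countType) (wo : Vo -> Vo -> RR) (ori : rel Vo) (n : Vo -> Vo -> nat)
  (x y : Vo) (i : nat) (Hp : newv_pred wo ori n (x, y, i)) (v : modV wo ori n) :
  leq 2 (n x y) ->
  modw wo ori n (inr (exist _ (x, y, i) Hp)) v =
  if (v == prevv wo ori n x y i) || (v == nextv wo ori n x y i) then (n x y)%:R * wo x y else 0.
Proof.
move=> Hn.
case/and4P: (Hp) => /= Hor Hw H1 H2.
rewrite /prevv /nextv.
case: v => [a | [[[x' y'] j] Hq]] /=;
  case: insubP => [u Pu Vu|nPu]; case: insubP => [u' Pu' Vu'|nPu'] /=;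
  rewrite ?eqLL ?eqLR ?eqRL ?eqRR ?Vu ?Vu' /= ?xpair_eqE;
  try (move: Pu; rewrite /newv_pred /= Hor Hw /= => Pu);
  try (move: Pu'; rewrite /newv_pred /= Hor Hw /= => Pu');
  try (move: nPu; rewrite /newv_pred /= Hor Hw /= => nPu);
  try (move: nPu'; rewrite /newv_pred /= Hor Hw /= => nPu');
  rewrite ?/old_at ?[x' == x]eq_sym ?[y' == y]eq_sym;
  try (move: Hq; rewrite /newv_pred /= => /and4P[_ _ Hq1 Hq2]);
  idtac.
all: try (match goal with |- (if ?c then _ else _) = 0 => have -> : c = false by lia end; done).
all: try (congr (if _ then _ else _); lia).
all: case: (eqVneq x x') Hq2 => [<-|hx] Hq2; case: (eqVneq y y') Hq2 => [<-|hy] Hq2; rewrite ?eqxx.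
all: try (match goal with |- (if ?c then _ else _) = 0 => have -> : c = false by lia end; done).
all: try (congr (if _ then _ else _); lia).
all: done.
Qed.

Lemma phi_prev (Vo : countType) (wo : Vo -> Vo -> RR) (sigma : Vo -> Vo -> RR) (ori : rel Vo) (n : Vo -> Vo -> nat)
  (x y : Vo) (i : nat) : newv_pred wo ori n (x, y, i) ->
  phi sigma (prevv wo ori n x y i) = psi sigma n x y i.-1.
Proof.
case/and4P => /= Hor Hw H1 H2; rewrite /prevv.
case: insubP => [u Pu Vu|nPu] /=; first by rewrite Vu.
move: nPu; rewrite /newv_pred /= Hor Hw /= => nPu.
have -> : i.-1 = 0%N by lia.
by rewrite /psi mulr0n !(mul0r, mulr0, addr0).
Qed.

Lemma phi_next (Vo : countType) (wo : Vo -> Vo -> RR) (sigma : Vo -> Vo -> RR) (ori : rel Vo) (n : Vo -> Vo -> nat)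
  (x y : Vo) (i : nat) : newv_pred wo ori n (x, y, i) ->
  phi sigma (nextv wo ori n x y i) = psi sigma n x y i.+1.
Proof.
case/and4P => /= Hor Hw H1 H2; rewrite /nextv.
case: insubP => [u Pu Vu|nPu] /=; first by rewrite Vu.
move: nPu; rewrite /newv_pred /= Hor Hw /= => nPu.
have -> : i.+1 = n x y by lia.
have hn : (n x y)%:R != 0 :> RR by rewrite pnatr_eq0; lia.
by rewrite /psi divff // subrr !mulr0 addr0.
Qed.

Lemma prev_neq_next (Vo : countType) (wo : Vo -> Vo -> RR) (ori : rel Vo) (n : Vo -> Vo -> nat)
  (x y : Vo) (i : nat) : x != y ->
  prevv wo ori n x y i != nextv wo ori n x y i.
Proof.
move=> xy; rewrite /prevv /nextv.
case: insubP => [u Pu Vu|nPu]; case: insubP => [u' Pu' Vu'|nPu'];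
  rewrite ?eqLL ?eqLR ?eqRL ?eqRR ?Vu ?Vu' ?xpair_eqE //.
apply/negP => /andP[_ /eqP]; lia.
Qed.

Lemma lap_new (Vo : countType) (wo : Vo -> Vo -> RR) (muo : Vo -> RR) (sigma : Vo -> Vo -> RR)
  (ori : rel Vo) (n : Vo -> Vo -> nat)
  (x y : Vo) (i : nat) (Hp : newv_pred wo ori n (x, y, i)) :
  leq 2 (n x y) -> x != y -> sigma x y != 0 ->
  laplacian (modw wo ori n) (modmu wo muo sigma ori n) (phi sigma) (inr (exist _ (x, y, i) Hp)) = 4.
Proof.
move=> Hn xy Hs.
case/and4P: (Hp) => /= Hor Hw H1 H2.
have wn0 : (n x y)%:R * wo x y != 0.
  by rewrite mulf_eq0 negb_or pnatr_eq0 (gt_eqF Hw) andbT; lia.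
rewrite /laplacian.
have -> : [set v | modw wo ori n (inr (exist _ (x, y, i) Hp)) v != 0] =
   [set prevv wo ori n x y i] `|` [set nextv wo ori n x y i].
  have key v : (modw wo ori n (inr (exist _ (x, y, i) Hp)) v != 0) <->
     (v = prevv wo ori n x y i \/ v = nextv wo ori n x y i).
    rewrite modw_new //; split.
      by case: ifP => [/orP[/eqP->|/eqP->] _|_]; [left|right|rewrite eqxx].
    by case=> ->; rewrite eqxx ?orbT.
  by apply/seteqP; split => v /key.
rewrite fsbigU0 ?fsbig_set1; first last.
- move=> v [/= -> e]; apply/negP: (prev_neq_next wo ori n i xy); by rewrite -e eqxx.
- exact: finite_set1.
- exact: finite_set1.
rewrite !modw_new // !eqxx ?orbT /= phi_prev // phi_next //.
rewrite ?RmultE ?RdivE ?RplusE ?IZRposE ?INRE /=.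
have [k ek] : exists k, i = k.+1 by exists i.-1; lia.
rewrite ek /psi /= !mulrSr.
have hn : (n x y)%:R != 0 :> RR by rewrite pnatr_eq0; lia.
have hw : wo x y != 0 by rewrite gt_eqF.
field.
by rewrite hn Hs hw.
Qed.

Lemma hh_spec (Vo : countType) (wo : Vo -> Vo -> RR) (ori : rel Vo) (n : Vo -> Vo -> nat) (a z : Vo) :
  (forall x y, wo x y = wo y x) -> orientation wo ori -> edge_weight wo n -> 0 < wo a z ->
  (ori a z /\ exists q, hh wo ori n a z = inr q /\ val q = (a, z, 1%N)) \/
  (ori z a /\ exists q, hh wo ori n a z = inr q /\ val q = (z, a, (n z a).-1)).
Proof.
move=> Hsym Hori Hew Hw.
have [_ Hn] := Hew a z Hw.
have Hw' : 0 < wo z a by rewrite -Hsym.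
have [_ Hn'] := Hew z a Hw'.
rewrite /hh; case: insubP => [u Pu Vu|nPu].
  left; split; last by exists u.
  by case/and4P: Pu.
have noaz : ~~ ori a z by move: nPu; rewrite /newv_pred /= Hw Hn /= !andbT.
have oza : ori z a by move: noaz; rewrite (Hori a z Hw) negbK.
case: insubP => [u Pu Vu|nPu2].
  by right; split => //; exists u.
exfalso; move: nPu2; rewrite /newv_pred /= oza Hw' /=; lia.
Qed.

Lemma hh_val (Vo : countType) (wo : Vo -> Vo -> RR) (sigma : Vo -> Vo -> RR) (ori : rel Vo) (n : Vo -> Vo -> nat) (a z : Vo) :
  (forall x y, wo x y = wo y x) -> orientation wo ori -> edge_weight wo n ->
  (forall x y, 0 < wo x y -> sigma x y = sigma y x) -> 0 < wo a z ->
  modw wo ori n (inl a) (hh wo ori n a z) = (n a z)%:R * wo a z /\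
  phi sigma (hh wo ori n a z) = 1 + 4 * sigma a z ^+ 2 * ((n a z)%:R - 1) / (n a z)%:R ^+ 2.
Proof.
move=> Hsym Hori Hew Hsig Hw.
have [Hnn Hn] := Hew a z Hw.
have hn : (n a z)%:R != 0 :> RR by rewrite pnatr_eq0; lia.
have [m em] : exists m, n a z = m.+1 by exists (n a z).-1; lia.
case: (hh_spec Hsym Hori Hew Hw) => [[_ [[[[x y] j] Hq] [-> /= [-> -> ->]]]]|[_ [[[[x y] j] Hq] [-> /= [-> -> ->]]]]].
  rewrite /old_at eqxx /=; split => //.
  rewrite /psi em !mulrSr; field; by rewrite -mulrSr pnatr_eq0.
have em' : n z a = m.+1 by lia.
rewrite /old_at em' /= !eqxx ?orbT /= (Hsym z a) em; split => //.
rewrite /psi em' -(Hsig a z Hw) /= !mulrSr; field; by rewrite -mulrSr pnatr_eq0.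
Qed.

Definition gback (Vo : countType) (wo : Vo -> Vo -> RR) (ori : rel Vo) (n : Vo -> Vo -> nat) (a : Vo)
  (v : modV wo ori n) : Vo :=
  match v with inl b => b | inr q => let: (x, y, _) := val q in if x == a then y else x end.

Lemma gback_hh (Vo : countType) (wo : Vo -> Vo -> RR) (ori : rel Vo) (n : Vo -> Vo -> nat) (a z : Vo) :
  (forall x y, wo x y = wo y x) -> orientation wo ori -> edge_weight wo n -> 0 < wo a z ->
  gback a (hh wo ori n a z) = z.
Proof.
move=> Hsym Hori Hew Hw.
case: (hh_spec Hsym Hori Hew Hw) => [[_ [q [-> Vq]]]|[_ [q [-> Vq]]]]; rewrite /gback Vq /=.
  by rewrite eqxx.
by case: eqP.
Qed.

Lemma hh_surj (Vo : countType) (wo : Vo -> Vo -> RR) (ori : rel Vo) (n : Vo -> Vo -> nat) (a : Vo)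
  (v : modV wo ori n) :
  (forall x y, wo x y = wo y x) -> orientation wo ori -> edge_weight wo n ->
  modw wo ori n (inl a) v != 0 -> exists2 z, 0 < wo a z & hh wo ori n a z = v.
Proof.
move=> Hsym Hori Hew.
case: v => [b|[[[x y] j] Hq]] /=; first by rewrite eqxx.
case: ifP => [Hc _|]; last by rewrite eqxx.
case/and4P: (Hq) => /= Hor Hw H1 H2.
have : ((a == x) && (j == 1%N)) || ((a == y) && (j.+1 == n x y)) by move: Hc; rewrite /old_at; lia.
case/orP => /andP[/eqP eax /eqP ej].
  subst a j; exists y => //.
  case: (hh_spec Hsym Hori Hew Hw) => [[_ [q [-> Vq]]]|[Hyx _]].
    by congr inr; apply: val_inj; rewrite Vq.
  by move: Hor; rewrite (Hori x y Hw) Hyx.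
subst a.
have Hw' : 0 < wo y x by rewrite Hsym.
exists x => //.
case: (hh_spec Hsym Hori Hew Hw') => [[Hyx _]|[_ [q [-> Vq]]]].
  by move: Hor; rewrite (Hori x y Hw) Hyx.
congr inr; apply: val_inj; rewrite Vq /=.
by rewrite -ej.
Qed.

Lemma lap_old (Vo : countType) (wo : Vo -> Vo -> RR) (muo : Vo -> RR) (sigma : Vo -> Vo -> RR)
  (ori : rel Vo) (n : Vo -> Vo -> nat) (a : Vo) :
  (forall x y, wo x y = wo y x) -> (forall x y, 0 <= wo x y) -> 0 < muo a ->
  finite_set [set y | wo a y != 0] ->
  orientation wo ori -> edge_weight wo n ->
  (forall x y, 0 < wo x y -> sigma x y = sigma y x) ->
  (muo a)^-1 * \sum_(y \in [set y | wo a y != 0]) (wo a y * sigma a y ^+ 2) <= 1 ->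
  -4 <= laplacian (modw wo ori n) (modmu wo muo sigma ori n) (phi sigma) (inl a).
Proof.
move=> Hsym Hge Hmu Hfin Hori Hew Hsig Had.
have pos z : wo a z != 0 -> 0 < wo a z by move=> h; rewrite lt_def h Hge.
rewrite /laplacian.
have -> : [set v | modw wo ori n (inl a) v != 0] = hh wo ori n a @` [set y | wo a y != 0].
  apply/seteqP; split => v.
    by move=> /(hh_surj Hsym Hori Hew)[z hz <-]; exists z => //=; rewrite gt_eqF.
  case=> z /pos hz <-.
  suff : modw wo ori n (inl a) (hh wo ori n a z) != 0 by [].
  have [-> _] := hh_val Hsym Hori Hew Hsig hz.
  have [_ Hn] := Hew a z hz.
  by rewrite mulf_eq0 negb_or pnatr_eq0 (gt_eqF hz) andbT; lia.
rewrite fsbig_image; last first.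
  move=> z1 z2; rewrite !inE /= => /pos h1 /pos h2 e.
  by rewrite -(gback_hh Hsym Hori Hew h1) e (gback_hh Hsym Hori Hew h2).
rewrite ?RmultE.
set S := \sum_(y \in [set y | wo a y != 0]) (wo a y * sigma a y ^+ 2).
set T := (X in _ * X).
have Hle : -4 * S <= T.
  rewrite /S /T !fsbig_finite // mulr_sumr big_seq [X in _ <= X]big_seq.
  apply: ler_sum => z; rewrite in_fset_set // inE => /pos hz.
  have [-> ->] := hh_val Hsym Hori Hew Hsig hz.
  have [_ Hn] := Hew a z hz.
  have hn : (n a z)%:R != 0 :> RR by rewrite pnatr_eq0; lia.
  rewrite /= (_ : _ * (1 - _) = -4 * (wo a z * sigma a z ^+ 2) + 4 * (wo a z * sigma a z ^+ 2) / (n a z)%:R); last by field.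
  rewrite lerDl; apply: divr_ge0; last by rewrite ler0n.
  by apply: mulr_ge0 => //; apply: mulr_ge0; [exact: ltW | exact: sqr_ge0].
rewrite /=.
apply: (le_trans _ (ler_wpM2l _ Hle)); last by rewrite invr_ge0 ltW.
rewrite mulrCA; move: Had; rewrite -/S; lra.
Qed.

Lemma real_bounds (s t : RR) : 0 < s <= 1 -> 0 <= t -> t <= 1 ->
  1 <= 1 + 4 * s ^+ 2 * (t * (1 - t)) <= 2.
Proof.
move=> /andP[s0 s1] t0 t1.
have q0 : 0 <= t * (1 - t) by nra.
have q1 : 4 * (t * (1 - t)) <= 1 by have := sqr_ge0 (2 * t - 1); nra.
have ss0 : 0 <= s ^+ 2 by rewrite sqr_ge0.
have ss1 : s ^+ 2 <= 1 by rewrite expr2; nra.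
set u := t * (1 - t) in q0 q1 *.
set w := s ^+ 2 in ss0 ss1 *.
have h1 : 0 <= w * u by apply: mulr_ge0.
have h2 : w * u <= u by rewrite ler_piMl.
apply/andP; split; lra.
Qed.

Lemma psi_bounds (Vo : countType) (sigma : Vo -> Vo -> RR) (n : Vo -> Vo -> nat) (x y : Vo) (i : nat) :
  0 < sigma x y <= 1 -> leq i (n x y) -> leq 1 (n x y) ->
  1 <= psi sigma n x y i <= 2.
Proof.
move=> hs hi hn.
have hn' : 0 < (n x y)%:R :> RR by rewrite ltr0n.
apply: real_bounds => //; first by rewrite divr_ge0 // ler0n.
by rewrite ler_pdivrMr // mul1r ler_nat.
Qed.

Theorem proposition3p5 :
  exists C1 C2 C3 : RR, [/\ 0 < C1, 0 < C2 & 1 < C3] /\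
  forall (Vo : countType) (wo : Vo -> Vo -> RR) (muo : Vo -> RR)
         (sigma : Vo -> Vo -> RR) (ori : rel Vo) (n : Vo -> Vo -> nat),
    simple_wgraph wo muo ->
    adapted wo muo sigma ->
    orientation wo ori ->
    edge_weight wo n ->
    exists phi : modV wo ori n -> RR,
      (forall v, 1 <= phi v <= C3) /\
      (forall v, 0 <= laplacian (modw wo ori n) (modmu wo muo sigma ori n) phi v
                        + potU C1 C2 v * phi v).
Proof.
exists 2%:R, 4%:R, 2%:R; split; first by split; lra.
move=> Vo wo muo sigma ori n [_ [Hsym Hloop] [Hge Hmu] Hfin _] [Hsig Hsig2 Had] Hori Hew.
exists (phi sigma); split.
  case=> [a|[[[x y] i] Hp]] /=; first by rewrite lexx ler1n.
  case/and4P: (Hp) => /= Hor Hw H1 H2.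
  by apply: psi_bounds; [exact: Hsig2 | lia | lia].
case=> [a|[[[x y] i] Hp]].
  have := lap_old (sigma:=sigma) (ori:=ori) (n:=n) Hsym Hge (Hmu a) (Hfin a) Hori Hew Hsig (Had a).
  have -> : potU 2%:R 4%:R (inl a : modV wo ori n) * phi sigma (inl a : modV wo ori n) = 4 by rewrite /= mulr1.
  lra.
case/and4P: (Hp) => /= Hor Hw H1 H2.
have xy : x != y by apply/eqP => exy; move: Hw; rewrite exy Hloop ltxx.
have [_ Hn] := Hew x y Hw.
have /andP[s0 _] := Hsig2 x y Hw.
rewrite lap_new //; last by rewrite gt_eqF.
have -> : potU 2%:R 4%:R (inr (exist _ (x, y, i) Hp) : modV wo ori n) * phi sigma (inr (exist _ (x, y, i) Hp) : modV wo ori n) = - 2 * psi sigma n x y i by rewrite /= RoppE.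
have := @psi_bounds _ sigma n x y i (Hsig2 x y Hw) (ltnW H2) (ltn_trans H1 H2).
case/andP => _ h; lra.
Qed.
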